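(* Let $\mathcal A$ be an algebra over a field $k$ and let $S$ be a commutative, associative, unital $k$-algebra. Then $$\mathcal D(\mathcal A\otimes S)=\mathcal D_S(\mathcal A\otimes S)\oplus\mathcal D_{\mathcal A\otimes 1}(\mathcal A\otimes S),$$ a direct sum of vector spaces.
   Context: An algebra over $k$ is a $k$-vector space with a bilinear product (not necessarily associative). $\mathcal D(\mathcal B)$ denotes the Lie algebra of derivations of an algebra $\mathcal B$. The algebra $\mathcal A\otimes S$ has product $(a\otimes s)(a'\otimes s')=aa'\otimes ss'$ and is an $S$-bimodule via $s'\cdot(a\otimes s)=(a\otimes s)\cdot s'=a\otimes ss'$. $\mathcal D_S(\mathcal A\otimes S)$ is the set of $d\in\mathcal D(\mathcal A\otimes S)$ with $d(a\otimes ss')=s'd(a\otimes s)$ for all $a\in\mathcal A$, $s,s'\in S$. $\mathcal D_{\mathcal A\otimes 1}(\mathcal A\otimes S)=\{\delta\in\mathcal D(\mathcal A\otimes S)\mid \delta(\mathcal A\otimes 1)=0\}$. *)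

(* Defs.v *)
From HB Require Import structures.
From mathcomp Require Import all_boot all_order all_algebra.
Set Implicit Arguments. Unset Strict Implicit. Unset Printing Implicit Defensive.
Import GRing.Theory.
Local Open Scope ring_scope.

Definition bilinear_map (k : fieldType) (U V W : lmodType k) (f : U -> V -> W) : Prop :=
  (forall v : V, linear (fun u => f u v)) /\ (forall u : U, linear (f u)).

Definition is_tensor_product (k : fieldType) (U V T : lmodType k)
    (tens : U -> V -> T) : Prop :=
  bilinear_map tens /\
  forall (W : lmodType k) (f : U -> V -> W), bilinear_map f ->
    exists g : T -> W, [/\ linear g,
      (forall u v, g (tens u v) = f u v) &
      (forall g' : T -> W, linear g' -> (forall u v, g' (tens u v) = f u v) ->
          forall t, g' t = g t)].

Definition is_derivation (k : fieldType) (B : lmodType k) (mulB : B -> B -> B)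
    (d : B -> B) : Prop :=
  linear d /\ forall x y, d (mulB x y) = mulB (d x) y + mulB x (d y).

Definition is_S_derivation (k : fieldType) (A : lmodType k) (S : comAlgType k)
    (T : lmodType k) (tens : A -> S -> T) (mulT : T -> T -> T)
    (actT : S -> T -> T) (d : T -> T) : Prop :=
  is_derivation mulT d /\
  forall a (s s' : S), d (tens a (s * s')) = actT s' (d (tens a s)).

Definition is_A1_derivation (k : fieldType) (A : lmodType k) (S : comAlgType k)
    (T : lmodType k) (tens : A -> S -> T) (mulT : T -> T -> T) (d : T -> T) : Prop :=
  is_derivation mulT d /\ forall a, d (tens a 1) = 0.

(* Main.v *)
Require Import Defs.
From HB Require Import structures.
From mathcomp Require Import all_boot all_order all_algebra.
Import GRing.Theory.
Local Open Scope ring_scope.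

Lemma linD' {k : fieldType} {U W : lmodType k} {f : U -> W} :
  linear f -> forall u v, f (u + v) = f u + f v.
Proof. by move=> Hf u v; move: (Hf 1 u v); rewrite !scale1r. Qed.

Lemma lin0' {k : fieldType} {U W : lmodType k} {f : U -> W} :
  linear f -> f 0 = 0.
Proof.
move=> Hf; have H := linD' Hf 0 0; rewrite addr0 in H.
by apply: (addrI (f 0)); rewrite addr0 -H.
Qed.

Lemma linZ' {k : fieldType} {U W : lmodType k} {f : U -> W} :
  linear f -> forall a u, f (a *: u) = a *: f u.
Proof. by move=> Hf a u; move: (Hf a u 0); rewrite (lin0' Hf) !addr0. Qed.

Lemma linN' {k : fieldType} {U W : lmodType k} {f : U -> W} :
  linear f -> forall u, f (- u) = - f u.
Proof. by move=> Hf u; rewrite -scaleN1r (linZ' Hf) scaleN1r. Qed.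

Lemma linB' {k : fieldType} {U W : lmodType k} {f : U -> W} :
  linear f -> forall u v, f (u - v) = f u - f v.
Proof. by move=> Hf u v; rewrite (linD' Hf) (linN' Hf). Qed.

Lemma linear_comp' {k : fieldType} {U V W : lmodType k} {f : U -> V} {g : V -> W} :
  linear f -> linear g -> linear (fun x => g (f x)).
Proof. by move=> Hf Hg a u v; rewrite Hf Hg. Qed.

Lemma linear_add' {k : fieldType} {U W : lmodType k} {f g : U -> W} :
  linear f -> linear g -> linear (fun x => f x + g x).
Proof. by move=> Hf Hg a u v; rewrite Hf Hg scalerDr addrACA. Qed.

Lemma linear_sub' {k : fieldType} {U W : lmodType k} {f g : U -> W} :
  linear f -> linear g -> linear (fun x => f x - g x).
Proof. by move=> Hf Hg a u v; rewrite Hf Hg scalerBr opprD addrACA. Qed.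

Lemma linear_id' (k : fieldType) (U : lmodType k) : linear (fun x : U => x).
Proof. by []. Qed.

Lemma linear_zero' (k : fieldType) (U W : lmodType k) : linear (fun _ : U => 0 : W).
Proof. by move=> a u v; rewrite scaler0 addr0. Qed.

Lemma tens_ext {k : fieldType} {A S T W : lmodType k} {tens : A -> S -> T} :
  is_tensor_product tens -> forall g1 g2 : T -> W, linear g1 -> linear g2 ->
  (forall a s, g1 (tens a s) = g2 (tens a s)) -> forall t, g1 t = g2 t.
Proof.
move=> [[Hl Hr] Hu] g1 g2 H1 H2 E t.
have Hb : bilinear_map (fun a s => g1 (tens a s)).
  by split=> [v|u]; apply: linear_comp' => //.
have [g [_ Hg Hun]] := Hu W _ Hb.
by rewrite (Hun g1 H1 (fun _ _ => erefl)) (Hun g2 H2 (fun u v => esym (E u v))).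
Qed.

Lemma tens_ex {k : fieldType} {A S T W : lmodType k} {tens : A -> S -> T} :
  is_tensor_product tens -> forall f : A -> S -> W, bilinear_map f ->
  exists g : T -> W, linear g /\ forall a s, g (tens a s) = f a s.
Proof.
move=> [_ Hu] f Hf; have [g [Hl Hg _]] := Hu W f Hf; by exists g.
Qed.

Theorem lemma2p1
  (k : fieldType)
  (A : lmodType k) (mulA : A -> A -> A) (HmulA : bilinear_map mulA)
  (S : comAlgType k)
  (T : lmodType k) (tens : A -> S -> T) (Htens : is_tensor_product tens)
  (mulT : T -> T -> T) (HmulT : bilinear_map mulT)
  (HmulT_tens : forall a a' (s s' : S),
      mulT (tens a s) (tens a' s') = tens (mulA a a') (s * s'))
  (actT : S -> T -> T) (HactT : forall s : S, linear (actT s))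
  (HactT_tens : forall a (s s' : S), actT s' (tens a s) = tens a (s * s')) :
  (forall d : T -> T, is_derivation mulT d ->
     exists d1 d2 : T -> T,
       [/\ is_S_derivation tens mulT actT d1,
           is_A1_derivation tens mulT d2 &
           forall t, d t = d1 t + d2 t])
  /\
  (forall d : T -> T, is_S_derivation tens mulT actT d ->
     is_A1_derivation tens mulT d -> forall t, d t = 0).
Proof.
have [[HtL HtR] _] := Htens.
have [HmL HmR] := HmulT.
have ext := tens_ext Htens.
have act1 : forall t, actT 1 t = t.
  apply: (ext _ _ _ (HactT 1) (@linear_id' _ _)) => a s.
  by rewrite HactT_tens mulr1.
have actM : forall s s' t, actT s (actT s' t) = actT (s' * s) t.
  move=> s s'; apply: ext.
  - by apply: linear_comp'.
  - by [].
  by move=> a s0; rewrite !HactT_tens mulrA.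
have actLin : forall t, linear (fun s => actT s t).
  move=> t a u v; move: t.
  have Lr : linear (fun t => a *: actT u t + actT v t).
    apply: linear_add' (HactT v).
    by move=> b x y; rewrite (HactT u) scalerDr !scalerA mulrC.
  apply: (ext _ _ _ (HactT (a *: u + v)) Lr).
  move=> a0 s0; rewrite /= !HactT_tens.
  by rewrite (@mulrDr S) -scalerAr (linD' (HtR a0)) (linZ' (HtR a0)).
have actMulL : forall s u v, actT s (mulT u v) = mulT (actT s u) v.
  move=> s u v; move: u.
  apply: (ext _ (fun u => actT s (mulT u v)) (fun u => mulT (actT s u) v)
            (linear_comp' (HmL v) (HactT s)) (linear_comp' (HactT s) (HmL v))).
  move=> a s0; move: v.
  apply: (ext _ (fun v => actT s (mulT (tens a s0) v)) (fun v => mulT (actT s (tens a s0)) v)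
            (linear_comp' (HmR _) (HactT s)) (HmR _)).
  by move=> a' s'; rewrite !HmulT_tens !HactT_tens HmulT_tens -!mulrA [s' * s]mulrC.
have actMulR : forall s u v, actT s (mulT u v) = mulT u (actT s v).
  move=> s u v; move: u.
  apply: (ext _ (fun u => actT s (mulT u v)) (fun u => mulT u (actT s v))
            (linear_comp' (HmL v) (HactT s)) (HmL _)).
  move=> a s0; move: v.
  apply: (ext _ (fun v => actT s (mulT (tens a s0) v)) (fun v => mulT (tens a s0) (actT s v))
            (linear_comp' (HmR _) (HactT s)) (linear_comp' (HactT s) (HmR _))).
  by move=> a' s'; rewrite !HmulT_tens !HactT_tens HmulT_tens -!mulrA.
split.
- move=> d [dL dD].
  have Hb : bilinear_map (fun a (s : S) => actT s (d (tens a 1))).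
    split=> [v|u].
    + exact: (linear_comp' (linear_comp' (HtL 1) dL) (HactT v)).
    + exact: (actLin (d (tens u 1))).
  have [d1 [d1L d1t]] := tens_ex Htens _ Hb.
  have d1D : forall x y, d1 (mulT x y) = mulT (d1 x) y + mulT x (d1 y).
    move=> x y; move: x.
    apply: (ext _ (fun x => d1 (mulT x y)) (fun x => mulT (d1 x) y + mulT x (d1 y))
              (linear_comp' (HmL y) d1L) (linear_add' (linear_comp' d1L (HmL y)) (HmL _))).
    move=> a s; move: y.
    apply: (ext _ (fun y => d1 (mulT (tens a s) y))
                  (fun y => mulT (d1 (tens a s)) y + mulT (tens a s) (d1 y))
              (linear_comp' (HmR _) d1L) (linear_add' (HmR _) (linear_comp' d1L (HmR _)))).
    move=> a' s'; rewrite HmulT_tens !d1t.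
    have -> : tens (mulA a a') 1 = mulT (tens a 1) (tens a' 1) by rewrite HmulT_tens mulr1.
    rewrite dD (linD' (HactT _)); congr (_ + _).
    + by rewrite -actM actMulL actMulR HactT_tens mul1r.
    + by rewrite mulrC -actM actMulR actMulL HactT_tens mul1r.
  exists d1, (fun t => d t - d1 t); split.
  + split; first by split; [exact: d1L | exact: d1D].
    by move=> a s s'; rewrite !d1t actM.
  + split; first split.
    * exact: linear_sub' dL d1L.
    * move=> x y; rewrite dD d1D (linB' (HmL y)) (linB' (HmR x)).
      by rewrite opprD addrACA.
    * by move=> a; rewrite d1t act1 subrr.
  + by move=> t; rewrite addrC subrK.
- move=> d [[dL _] dS] [_ d0] t.
  apply: (ext _ d (fun _ => 0) dL (@linear_zero' _ _ _)) => a s.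
  by rewrite -[s]mul1r dS d0 (lin0' (HactT _)).
Qed.
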